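(* For every non-negative integer $d$, $$\sum_{a\in A_+(d)}\frac{\chi_t(a)}{a}=(-1)^d\frac{b_d(\chi_t)}{L_d}\quad\text{in } K[t].$$
   Context: $q$ is a power of a prime, $A=\mathbb{F}_q[\theta]$, $K=\mathbb{F}_q(\theta)$, $A_+(d)$ is the set of monic polynomials of degree $d$ in $A$. $t$ is an indeterminate and $\chi_t:A\to A[t]$ is the $\mathbb{F}_q$-algebra morphism with $\theta\mapsto t$. $D_d$ is the product of all monic polynomials of degree $d$ in $A$, $L_d$ is the least common multiple of all polynomials of degree $d$ in $A$, and $D_0=L_0=1$. For $f:A\to A[t]$, $M_d(f)(z):=\sum_{b\in A_+(d)} f(b)\prod_{a\in A_+(d)\setminus\{b\}}(z-a)\in A[t][z]$. The Wagner coefficients are $b_d(\chi_t):=(-1)^d\frac{L_d}{D_d}M_d(\chi_t)(0)\in K[t]$. *)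

(* Defs.v *)
From HB Require Import structures.
From mathcomp Require Import all_boot all_order all_algebra all_field.
Set Implicit Arguments. Unset Strict Implicit. Unset Printing Implicit Defensive.
Import GRing.Theory.
Local Open Scope ring_scope.

(* F plays the role of F_q (any finite field; its order q is a prime power).
   A = {poly F} (variable theta), K = {fraction {poly F}},
   A[t] = {poly {poly F}}, K[t] = {poly {fraction {poly F}}},
   A[t][z] = {poly {poly {poly F}}}. *)

Section Defs.
Variable F : finFieldType.

Definition monic_of (d : nat) (c : {ffun 'I_d -> F}) : {poly F} :=
  'X^d + \sum_(i < d) c i *: 'X^i.

Definition Aplus (d : nat) : seq {poly F} :=
  [seq monic_of c | c <- enum {ffun 'I_d -> F}].

Definition Dd (d : nat) : {poly F} := \prod_(a <- Aplus d) a.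

Definition lcmp (p q : {poly F}) : {poly F} := (p * q) %/ gcdp p q.

(* L_d : the monic lcm of all polynomials of degree d, i.e. of all monic
   polynomials of degree d (every degree-d polynomial is associate to one). *)
Definition Ld (d : nat) : {poly F} :=
  let l := \big[lcmp/1]_(a <- Aplus d) a in (lead_coef l)^-1 *: l.

Definition toK (a : {poly F}) : {fraction {poly F}} := @FracField.tofrac _ a.

(* chi_t : A -> A[t], theta |-> t *)
Definition chi_t (a : {poly F}) : {poly {poly F}} := map_poly polyC a.

Definition AtoK (x : {poly {poly F}}) : {poly {fraction {poly F}}} :=
  map_poly toK x.

Definition Md (d : nat) (f : {poly F} -> {poly {poly F}})
  : {poly {poly {poly F}}} :=
  \sum_(b <- Aplus d)
     (f b)%:P * \prod_(a <- Aplus d | a != b) ('X - (a%:P)%:P).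

Definition bd (d : nat) : {poly {fraction {poly F}}} :=
  (-1) ^+ d * (toK (Ld d) / toK (Dd d))%:P * AtoK (Md d chi_t).[0].

End Defs.

(* Main.v *)
Require Import Defs.
From HB Require Import structures.
From mathcomp Require Import all_boot all_order all_algebra all_field.
From mathcomp Require Import ring.
Import GRing.Theory.
Local Open Scope ring_scope.

Section Helpers.
Variable F : finFieldType.

Lemma coef_monic_of d (c : {ffun 'I_d -> F}) (i : 'I_d) :
  (monic_of c)`_i = c i.
Proof.
rewrite /monic_of coefD coefXn coef_sum.
rewrite (bigD1 i) //= coefZ coefXn eqxx mulr1 big1 ?addr0.
  by rewrite (ltn_eqF (ltn_ord i)) add0r.
move=> j Hj; rewrite coefZ coefXn.
case: eqP => [Hij|]; last by rewrite mulr0.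
by case/eqP: Hj; apply: val_inj.
Qed.

Lemma coef_monic_of_d d (c : {ffun 'I_d -> F}) : (monic_of c)`_d = 1.
Proof.
rewrite /monic_of coefD coefXn eqxx coef_sum big1 ?addr0 // => j _.
by rewrite coefZ coefXn (gtn_eqF (ltn_ord j)) mulr0.
Qed.

Lemma monic_of_inj d : injective (@monic_of F d).
Proof.
move=> c1 c2 H; apply/ffunP => i.
by rewrite -coef_monic_of H coef_monic_of.
Qed.

Lemma Aplus_uniq d : uniq (Aplus F d).
Proof. by rewrite map_inj_uniq ?enum_uniq //; apply: monic_of_inj. Qed.

Lemma Aplus_neq0 d a : a \in Aplus F d -> a != 0.
Proof.
case/mapP => c _ ->; apply/eqP => H.
by have := coef_monic_of_d _ c; rewrite H coef0 => /eqP; rewrite eq_sym oner_eq0.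
Qed.

Lemma size_Aplus d : size (Aplus F d) = (#|F| ^ d)%N.
Proof. by rewrite size_map -cardE card_ffun card_ord. Qed.

Lemma lcmp_neq0 (p q : {poly F}) : p != 0 -> q != 0 -> lcmp p q != 0.
Proof.
move=> hp hq; rewrite /lcmp; apply/eqP => H.
have := divpK (dvdp_trans (dvdp_gcdl p q) (dvdp_mulr q (dvdpp p))).
by rewrite H mul0r => /esym/eqP; rewrite mulf_eq0 (negbTE hp) (negbTE hq).
Qed.

Lemma Ld_neq0 d : Ld F d != 0.
Proof.
have hl : \big[@lcmp F/1]_(a <- Aplus F d) a != 0.
  rewrite big_seq; apply: (big_ind (fun x => x != 0)) => //.
  - exact: oner_neq0.
  - exact: lcmp_neq0.
  - exact: Aplus_neq0.
by rewrite /Ld scale_poly_eq0 negb_or invr_eq0 lead_coef_eq0 hl.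
Qed.

Lemma signF_card d : (-1 : F) ^+ (#|F| ^ d).-1 = 1.
Proof.
have h : forall n, (-1 : F) ^+ (#|F| ^ n) = -1.
  elim=> [|n IH]; first by rewrite expr1.
  by rewrite expnSr exprM IH expf_card.
have h0 : (0 < #|F|)%N by apply/card_gt0P; exists 0.
have hpos : (0 < #|F| ^ d)%N by rewrite expn_gt0 h0.
move: (h d); rewrite -(prednK hpos) exprSr mulrN1 => /oppr_inj.
by rewrite prednK.
Qed.

Lemma prodN_seq (R : comPzRingType) (I : Type) (s : seq I) (P : pred I) (f : I -> R) :
  \prod_(a <- s | P a) - f a = (-1) ^+ count P s * \prod_(a <- s | P a) f a.
Proof.
elim: s => [|x s IH]; first by rewrite !big_nil mulr1.
rewrite !big_cons /=; case: (P x) => /=; last by rewrite add0n IH.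
by rewrite IH exprS -mulN1r; ring.
Qed.

Lemma alg1 (K : fieldType) (d : nat) (Y : {poly K}) (l D : K) : l != 0 ->
  (-1) ^+ d * ((-1) ^+ d * (l / D)%:P * Y) / l%:P = (D^-1)%:P * Y.
Proof.
move=> hl.
rewrite !mulrA -exprD -signr_odd oddD addbb expr0 mul1r.
rewrite polyCV mulrAC -polyCM; congr (_ * _); congr polyC.
by rewrite mulrAC divff // mul1r.
Qed.

End Helpers.


Lemma key_lemma (F : finFieldType) d b : b \in Aplus F d ->
  (toK (Dd F d))^-1 * \prod_(a <- Aplus F d | a != b) - toK a = (toK b)^-1.
Proof.
move=> Hb.
rewrite prodN_seq.
have -> : count (fun a => a != b) (Aplus F d) = (#|F| ^ d).-1.
  have := count_predC (pred1 b) (Aplus F d).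
  rewrite count_uniq_mem ?Aplus_uniq // Hb size_Aplus => <-.
  by rewrite add1n.
have -> : (-1 : {fraction {poly F}}) ^+ (#|F| ^ d).-1 = 1.
  have := congr1 (fun x : F => @FracField.tofrac _ x%:P) (signF_card F d) => /=.
  by rewrite !rmorphXn !rmorphN1 !rmorph1.
rewrite mul1r /Dd /toK rmorph_prod (bigD1_seq b Hb (Aplus_uniq F d)) /=.
have hQ : \prod_(a <- Aplus F d | a != b) @FracField.tofrac _ a != 0.
  rewrite prodf_seq_neq0; apply/allP => a Ha; apply/implyP => _.
  by rewrite tofrac_eq0 (Aplus_neq0 _ _ _ Ha).
by rewrite invfM -mulrA mulVf // mulr1.
Qed.

Theorem theorem4p2p2 (F : finFieldType) (d : nat) :
  \sum_(a <- Aplus F d) AtoK (chi_t a) / (toK a)%:P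
  = (-1) ^+ d * bd F d / (toK (Ld F d))%:P.
Proof.
have hL : toK (Ld F d) != 0 by rewrite /toK tofrac_eq0 Ld_neq0.
have -> : (-1) ^+ d * bd F d / (toK (Ld F d))%:P
    = ((toK (Dd F d))^-1)%:P * AtoK (Md d (@chi_t F)).[0].
  by rewrite /bd; apply: alg1.
rewrite /Md horner_sum.
rewrite /AtoK rmorph_sum mulr_sumr; apply: eq_big_seq => b Hb.
rewrite hornerM hornerC horner_prod rmorphM rmorph_prod.
under eq_bigr do rewrite hornerXsubC sub0r rmorphN /= map_polyC /= -polyCN.

rewrite -rmorph_prod /=.
rewrite mulrCA -polyCM (key_lemma _ _ _ Hb) polyCV.
by [].
Qed.
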